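(* Let $F_0,F_1$ be distribution functions of real random variables $Y_0,Y_1$ and $\alpha\in(0,1)$. If $$1+\inf_{y\in\mathbb{R}}\min\{F_1(y)-P(Y_0<y),\,0\}>\alpha,$$ then every interval $I$ such that $P(Y_1-Y_0\in I)\ge1-\alpha$ for every joint distribution of $(Y_0,Y_1)$ with marginals $F_0,F_1$ satisfies $I\cap(-\infty,0]\neq\emptyset$ (i.e. the left endpoint of $I$ cannot be strictly positive).
   Context: $Y_0,Y_1$ are potential outcomes with known marginal cdfs $F_0,F_1$ and unknown joint distribution; $\mathrm{ITE}=Y_1-Y_0$. The quantity $1+\inf_y\min\{F_1(y)-P(Y_0<y),0\}$ is the sharp upper bound on $P(Y_1-Y_0\le0)$ over all joint distributions with these marginals. *)

(* Defs.v *)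
From HB Require Import structures.
From mathcomp Require Import all_boot all_order all_algebra.
From mathcomp Require Import all_classical all_reals all_analysis.
Set Implicit Arguments. Unset Strict Implicit. Unset Printing Implicit Defensive.
Import Order.TTheory GRing.Theory Num.Theory.
Local Open Scope classical_set_scope.
Local Open Scope ring_scope.

Definition cdf (R : realType) (mu : probability R R) (y : R) : R :=
  fine (mu `]-oo, y]%classic).

Definition cdf_lt (R : realType) (mu : probability R R) (y : R) : R :=
  fine (mu `]-oo, y[%classic).

Definition is_coupling (R : realType) (mu0 mu1 : probability R R)
  (pi : probability (R * R)%type R) : Prop :=
  (forall A : set R, measurable A -> pi (fst @^-1` A) = mu0 A) /\
  (forall A : set R, measurable A -> pi (snd @^-1` A) = mu1 A).

Definition ite_upper (R : realType) (mu0 mu1 : probability R R) : R :=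
  1 + inf [set Num.min (cdf mu1 y - cdf_lt mu0 y) 0 | y in [set: R]].

(* Main.v *)
Require Import Defs.
From HB Require Import structures.
From mathcomp Require Import all_boot all_order all_algebra.
From mathcomp Require Import all_classical all_reals all_analysis.
From mathcomp Require Import ring lra.
Import Order.TTheory GRing.Theory Num.Theory.
Import numFieldNormedType.Exports.
Local Open Scope classical_set_scope.
Local Open Scope ring_scope.
Set Implicit Arguments. Unset Strict Implicit. Unset Printing Implicit Defensive.


Lemma m01 (R : realType) : measurable (`]0, 1[%classic : set (measurableTypeR R)).
Proof. exact: measurable_itv. Qed.

Definition U01 (R : realType) : set (measurableTypeR R) -> \bar R := mrestr (@lebesgue_measure R) (@m01 R).

HB.instance Definition _ (R : realType) := Measure.on (@U01 R).

Lemma U01_setT (R : realType) : @U01 R setT = 1%E.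
Proof. by rewrite /U01 /mrestr setTI lebesgue_measure_itv/= lte01 sube0. Qed.

HB.instance Definition _ (R : realType) :=
  Measure_isProbability.Build _ _ _ (@U01 R) (U01_setT R).

Definition idTR (R : realType) : measurableTypeR R -> R := idfun.
HB.instance Definition _ (R : realType) :=
  @isMeasurableFun.Build _ _ _ _ (@idTR R) (@measurable_id _ _ setT).

Definition P01 (R : realType) : probability R R := distribution (@U01 R) (@idTR R).

Lemma P01E (R : realType) (A : set R) : P01 R A = lebesgue_measure (A `&` `]0, 1[).
Proof. by []. Qed.

Lemma prob_unique (R : realType) (P Q : probability R R) :
  (forall y, P `]-oo, y]%classic = Q `]-oo, y]%classic) ->
  forall A, measurable A -> P A = Q A.
Proof.
move=> H; apply: (@measure_unique _ _ _ (@measurable_realfun.RGenOInfty.G R)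
   (fun k => `]-(k%:R), +oo[%classic)).
- exact: measurable_realfun.RGenOInfty.measurableE.
- move=> _ _ [a ->] [b ->]; exists (Num.max a b).
  by apply/seteqP; split => x /=; rewrite !in_itv/= !andbT gt_max; [move=> [-> ->]|move/andP].
- by move=> k; exists (-(k%:R)).
- apply/seteqP; split => // x _; exists (Num.Def.archi_bound x) => //=.
  by rewrite in_itv/= andbT ltrNl; exact: unstable.ltrNbound.
- move=> _ [x ->]; rewrite -setCitvl; transitivity (1 - P `]-oo, x]%classic)%E; first exact: probability_setC.
  by rewrite H; symmetry; exact: probability_setC.
- by move=> k; rewrite (le_lt_trans (probability_le1 _ _))// ltry.
Qed.

Lemma sandwich (R : realType) (S : set R) (s t : R) : measurable S -> s <= t ->
  `]s, t[ `<=` S -> S `<=` `[s, t] -> (lebesgue_measure S = (t - s)%:E)%E.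
Proof.
move=> mS st h1 h2; apply/eqP; rewrite eq_le; apply/andP; split.
  apply: (@le_trans _ _ (lebesgue_measure (`[s, t]%classic : set R))).
    by apply: le_measure => //; rewrite inE //; exact: measurable_itv.
  by rewrite lebesgue_measure_itv/= lte_fin; case: ltgtP st => // ->; rewrite !subrr.
apply: (@le_trans _ _ (lebesgue_measure (`]s, t[%classic : set R)))%E.
  by rewrite lebesgue_measure_itv/= lte_fin; case: ltgtP st => // ->; rewrite !subrr.
by apply: le_measure => //; rewrite inE //; exact: measurable_itv.
Qed.

Section cdf_facts.
Context {R : realType} (mu : probability R R).

Lemma cdfE y : mu `]-oo, y]%classic = (Defs.cdf mu y)%:E.
Proof. by rewrite /Defs.cdf fineK// fin_num_measure. Qed.

Lemma cdf_ge0 y : 0 <= Defs.cdf mu y.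
Proof. by rewrite /Defs.cdf fine_ge0. Qed.

Lemma cdf_le1 y : Defs.cdf mu y <= 1.
Proof. by rewrite -lee_fin -cdfE probability_le1. Qed.

Lemma cdf_nd x y : x <= y -> Defs.cdf mu x <= Defs.cdf mu y.
Proof.
move=> xy; rewrite -lee_fin -!cdfE; apply: le_measure; rewrite ?inE//.
by apply: subitvPr; rewrite bnd_simp.
Qed.

Let idTR : R -> R := idfun.
#[local] HB.instance Definition _ :=
  @isMeasurableFun.Build _ _ _ _ idTR (@measurable_id _ _ setT).

Let cdfXE y : random_variable.cdf (idTR : {RV mu >-> R}) y = (Defs.cdf mu y)%:E.
Proof. by rewrite /random_variable.cdf /distribution /pushforward preimage_id cdfE. Qed.

Lemma cdf_rc y : Defs.cdf mu x @[x --> y^'+] --> Defs.cdf mu y.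
Proof.
have := @cdf_right_continuous _ _ _ mu idTR y.
have -> : random_variable.cdf (idTR : {RV mu >-> R}) = (fun y => (Defs.cdf mu y)%:E).
  by apply/funext => z; rewrite cdfXE.
move=> h; exact: (fine_cvg h).
Qed.

Lemma cdf_y1 : Defs.cdf mu x @[x --> +oo] --> (1:R).
Proof.
have := @cvg_cdfy1 _ _ _ mu idTR.
have -> : random_variable.cdf (idTR : {RV mu >-> R}) = (fun y => (Defs.cdf mu y)%:E).
  by apply/funext => z; rewrite cdfXE.
move=> h; exact: (fine_cvg h).
Qed.

Lemma cdf_Ny0 : Defs.cdf mu x @[x --> -oo] --> (0:R).
Proof.
have := @cvg_cdfNy0 _ _ _ mu idTR.
have -> : random_variable.cdf (idTR : {RV mu >-> R}) = (fun y => (Defs.cdf mu y)%:E).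
  by apply/funext => z; rewrite cdfXE.
move=> h; exact: (fine_cvg h).
Qed.


Lemma cdf_exists_ge u : u < 1 -> exists y, u <= Defs.cdf mu y.
Proof.
move=> u1; have [M [_ HM]] := cvgr_gt _ cdf_y1 _ u1.
by exists (M + 1); apply/ltW/HM; rewrite ltrDl.
Qed.

Lemma cdf_exists_lt u : 0 < u -> exists y, Defs.cdf mu y < u.
Proof.
move=> u0; have [M [_ HM]] := cvgr_lt _ cdf_Ny0 _ u0.
by exists (M - 1); apply/HM; rewrite ltrBlDr ltrDl.
Qed.

Lemma cdf_rc_ge y u : (forall z, y < z -> u <= Defs.cdf mu z) -> u <= Defs.cdf mu y.
Proof.
move=> H; rewrite leNgt; apply/negP => Fyu.
have : \forall t \near y^'+, y < t /\ Defs.cdf mu t < u.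
  near=> t; split; last by near: t; apply: (cvgr_lt _ (@cdf_rc y) _ Fyu).
  by near: t; exact: nbhs_right_gt.
move=> /filter_ex [t [yt Ft]].
by move: (H t yt); rewrite leNgt Ft.
Unshelve. all: by end_near. Qed.

Definition qf (u : R) : R :=
  if (0 < u) && (u < 1) then inf [set y | u <= Defs.cdf mu y] else 0.

Lemma qfP u y : 0 < u -> u < 1 -> (qf u <= y) = (u <= Defs.cdf mu y).
Proof.
move=> u0 u1; rewrite /qf u0 u1 /=.
set S := [set y | u <= Defs.cdf mu y].
have S0 : S !=set0 by have [z hz] := cdf_exists_ge u1; exists z.
have lS : has_lbound S.
  have [y0 hy0] := cdf_exists_lt u0; exists y0 => z Sz.
  rewrite leNgt; apply/negP => zy0.
  by move: (le_trans Sz (cdf_nd (ltW zy0))); rewrite leNgt hy0.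
apply/idP/idP => [h|h]; last exact: ge_inf.
apply: cdf_rc_ge => z yz.
have [w Sw wz] := inf_lt S0 (le_lt_trans h yz).
exact: le_trans Sw (cdf_nd (ltW wz)).
Qed.


Lemma qf_measurable : measurable_fun setT qf.
Proof.
apply: (measurability (@measurable_realfun.RGenOInfty.G R)); first exact: measurable_realfun.RGenOInfty.measurableE.
move=> _ [_ [x ->] <-].
have -> : [set: R] `&` qf @^-1` `]x, +oo[ =
   (`]0, 1[ `&` `]Defs.cdf mu x, +oo[) `|` (~` `]0, 1[ `&` [set _ | x < 0]).
  apply/seteqP; split => u /=.
    rewrite !in_itv /= !andbT => -[_ qu].
    case: (boolP ((0 < u) && (u < 1))) qu => [/andP[u0 u1]|hu] qu.
      by left; split => //; rewrite ltNge -qfP// -ltNge.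
    by right; split => //; move: qu; rewrite /qf (negbTE hu).
  rewrite !in_itv /= !andbT => -[[/andP[u0 u1] Fu]|[hu x0]]; split => //.
    by rewrite ltNge qfP// -ltNge.
  by rewrite /qf; move/negP/negbTE: hu => ->.
apply: measurableU; apply: measurableI => //.
  exact: measurableC.
by case: (boolP (x < 0)) => hx; [rewrite (_ : [set _ | _] = setT)//; apply/seteqP; split|
  rewrite (_ : [set _ | _] = set0)//; apply/seteqP; split => // ? /=; rewrite (negbTE hx)].
Qed.


HB.instance Definition _ := isMeasurableFun.Build _ _ _ _ qf qf_measurable.

Lemma qf_pre_meas (B : set R) : measurable B -> measurable (qf @^-1` B).
Proof. by move=> mB; rewrite -[_ @^-1` _]setTI; apply: qf_measurable. Qed.

Lemma qf_law A : measurable A -> P01 R (qf @^-1` A) = mu A.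
Proof.
move=> mA.
have -> : P01 R (qf @^-1` A) = distribution (P01 R) qf A by [].
apply: prob_unique => // y.
rewrite cdfE; transitivity (lebesgue_measure (qf @^-1` `]-oo, y]%classic `&` `]0, 1[%classic)); first by [].
rewrite -[X in _ = X%:E](subr0 (Defs.cdf mu y)); apply: sandwich; rewrite ?cdf_ge0//.
- by apply: measurableI; [exact: qf_pre_meas| exact: measurable_itv].
- move=> u /=; rewrite !in_itv/= => /andP[u0 uF].
  have u1 : u < 1 by rewrite (lt_le_trans uF)// cdf_le1.
  by rewrite u0 u1; split => //; rewrite qfP// ltW.
- move=> u /= [qu]; rewrite !in_itv/= => /andP[u0 u1].
  by rewrite ltW//= -qfP.
Qed.


Definition tau (c u : R) := if u < 1 - c then u + c else u - (1 - c).

Lemma tau_lt c u : u < 1 - c -> tau c u = u + c.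
Proof. by rewrite /tau => ->. Qed.

Lemma tau_ge c u : 1 - c <= u -> tau c u = u - (1 - c).
Proof. by rewrite /tau ltNge => ->. Qed.

Lemma tau_measurable c : measurable_fun setT (tau c).
Proof.
apply: measurable_fun_if => //.
- by apply: measurable_realfun.measurable_fun_ltr => //; exact: measurable_cst.
- by apply: measurable_funTS; apply: measurable_realfun.measurable_funD => //; exact: measurable_cst.
- by apply: measurable_funTS; apply: measurable_realfun.measurable_funB => //; exact: measurable_cst.
Qed.

Definition qtau c u := qf (tau c u).

Lemma qtau_measurable c : measurable_fun setT (qtau c).
Proof. exact: measurableT_comp qf_measurable (tau_measurable c). Qed.

Lemma qtau_pre_meas c (B : set R) : measurable B -> measurable (qtau c @^-1` B).
Proof. by move=> mB; rewrite -[_ @^-1` _]setTI; apply: qtau_measurable. Qed.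


HB.instance Definition _ c := isMeasurableFun.Build _ _ _ _ (qtau c) (qtau_measurable c).

Lemma qtau_law c A : 0 <= c -> c <= 1 -> measurable A -> P01 R (qtau c @^-1` A) = mu A.
Proof.
move=> c0 c1 mA.
have -> : P01 R (qtau c @^-1` A) = distribution (P01 R) (qtau c) A by [].
apply: prob_unique => // y.
rewrite cdfE.
set S := qtau c @^-1` `]-oo, y]%classic `&` `]0, 1[%classic.
transitivity (lebesgue_measure S); first by [].
set t := Defs.cdf mu y.
have t0 : 0 <= t by exact: cdf_ge0.
have t1 : t <= 1 by exact: cdf_le1.
have mS : measurable S.
  by apply: measurableI; [exact: qtau_pre_meas| exact: measurable_itv].
have -> : S = (S `&` `]-oo, 1 - c[) `|` (S `&` `[1 - c, +oo[).
  by rewrite -setIUr -setCitvr setUCl setIT.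
rewrite measureU; last 3 first.
- by apply: measurableI => //; exact: measurable_itv.
- by apply: measurableI => //; exact: measurable_itv.
- by rewrite setIACA -setCitvr setICl setI0.
rewrite (_ : _ (S `&` `]-oo, 1 - c[%classic) = ((Num.max 0 (t - c)) - 0)%:E); last first.
  apply: sandwich.
  - by apply: measurableI => //; exact: measurable_itv.
  - by rewrite le_max lexx.
  - move=> u /=; rewrite !in_itv/= lt_max => /andP[u0 /orP[|ut]]; first by lra.
    have ulc : u < 1 - c by lra.
    split => //; rewrite /S /= !in_itv/= u0 /=; split; last by lra.
    rewrite /qtau tau_lt// qfP -/t; lra.
  - move=> u /= [[qu]]; rewrite !in_itv/= => /andP[u0 u1] => ulc.
    rewrite ltW//= le_max; apply/orP; right.
    rewrite !bnd_simp in u0 u1.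
    move: qu; rewrite /= in_itv/= /qtau tau_lt// qfP -/t; lra.
rewrite (_ : _ (S `&` `[1 - c, +oo[%classic) = ((Num.min 1 (1 - c + t)) - (1 - c))%:E); last first.
  apply: sandwich.
  - by apply: measurableI => //; exact: measurable_itv.
  - by rewrite le_min; apply/andP; split; lra.
  - move=> u /=; rewrite !in_itv/= lt_min => /andP[ulc /andP[u1 ut]].
    rewrite andbT ltW//; split => //; rewrite /S /= !in_itv/=; split; last by apply/andP; split; lra.
    rewrite /qtau tau_ge; last by lra.
    rewrite qfP -/t; lra.
  - move=> u /= [[qu]]; rewrite !in_itv/= andbT => /andP[u0 u1] ulc.
    rewrite ?bnd_simp in u0 u1 ulc.
    rewrite ulc /= le_min; apply/andP; split; first by lra.
    have [->|ulc'] := eqVneq u (1 - c); first by lra.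
    have ulc2 : 1 - c < u by rewrite lt_neqAle eq_sym ulc' ulc.
    move: qu; rewrite /= in_itv/= /qtau tau_ge// qfP -/t; lra.
case: (leP c t) => ct.
  have -> : Num.max 0 (t - c) = t - c by apply/max_idPr; lra.
  have -> : Num.min 1 (1 - c + t) = 1 by apply/min_idPl; lra.
  by rewrite -EFinD; congr (_%:E); lra.
have -> : Num.max 0 (t - c) = 0 by apply/max_idPl; lra.
have -> : Num.min 1 (1 - c + t) = 1 - c + t by apply/min_idPr; lra.
by rewrite -EFinD; congr (_%:E); lra.
Qed.

End cdf_facts.

Section main.
Context {R : realType}.

Lemma cdf_lt_bounds (mu : probability R R) z : 0 <= Defs.cdf_lt mu z <= 1.
Proof.
rewrite /Defs.cdf_lt fine_ge0//= -lee_fin fineK ?fin_num_measure//.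
exact: probability_le1.
Qed.

Lemma cdf_le_cdf_lt (mu : probability R R) y z : y < z -> Defs.cdf mu y <= Defs.cdf_lt mu z.
Proof.
move=> yz; rewrite /Defs.cdf /Defs.cdf_lt fine_le ?fin_num_measure//.
apply: le_measure; rewrite ?inE//.
by move=> x /=; rewrite !in_itv/= => /le_lt_trans; apply.
Qed.

Lemma key_ineq (mu0 mu1 : probability R R) c u :
  (forall z, Defs.cdf_lt mu0 z - c <= Defs.cdf mu1 z) ->
  0 <= c -> 0 < u -> u < 1 - c -> qf mu1 u <= qf mu0 (u + c).
Proof.
move=> hk c0 u0 uc.
have u1 : u < 1 by lra.
rewrite qfP//; apply: cdf_rc_ge => z yz.
have h1 : u + c <= Defs.cdf mu0 (qf mu0 (u + c)) by rewrite -qfP//; lra.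
have h2 := cdf_le_cdf_lt mu0 yz.
have h3 := hk z.
lra.
Qed.

Definition coupl (mu0 mu1 : probability R R) c (u : R) : (R * R)%type :=
  (qtau mu0 c u, qf mu1 u).

Lemma coupl_measurable mu0 mu1 c : measurable_fun setT (coupl mu0 mu1 c).
Proof. exact: measurable_fun_pair (qtau_measurable _ _) (qf_measurable _). Qed.

HB.instance Definition _ mu0 mu1 c :=
  isMeasurableFun.Build _ _ _ _ (coupl mu0 mu1 c) (coupl_measurable mu0 mu1 c).

End main.

Theorem mainTheorem12 (R : realType) (mu0 mu1 : probability R R) (alpha : R)
  (I : interval R) :
  0 < alpha < 1 ->
  alpha < ite_upper mu0 mu1 ->
  (forall pi : probability (R * R)%type R, is_coupling mu0 mu1 pi ->
     ((1 - alpha)%:E <= pi [set z : R * R | (z.2 - z.1)%R \in I])%E) ->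
  exists x : R, x \in I /\ x <= 0.
Proof.
move=> /andP[a0 a1] hU H.
case: (pselect (exists x : R, x \in I /\ x <= 0)) => // hneg; exfalso.
set Sset := [set Num.min (Defs.cdf mu1 y - Defs.cdf_lt mu0 y) 0 | y in [set: R]].
have lS : has_lbound Sset.
  exists (-1) => _ [y _ <-]; rewrite le_min; apply/andP; split; last by lra.
  have := cdf_ge0 mu1 y; have := cdf_lt_bounds mu0 y; move=> /andP[? ?] ?; lra.
set c := - inf Sset.
have hk : forall z, Defs.cdf_lt mu0 z - c <= Defs.cdf mu1 z.
  move=> z; have := ge_inf lS (ex_intro2 _ _ z Logic.I erefl : Sset _).
  rewrite le_min => /andP[h _]; rewrite /c; lra.
have c0 : 0 <= c.
  have := ge_inf lS (ex_intro2 _ _ 0 Logic.I erefl : Sset _).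
  rewrite le_min => /andP[_ h]; rewrite /c; lra.
have ca : c < 1 - alpha by move: hU; rewrite /ite_upper -/Sset /c; lra.
have c1 : c <= 1 by lra.
pose pi := distribution (P01 R) (coupl mu0 mu1 c).
have hc : is_coupling mu0 mu1 pi.
  split => A mA.
    exact: (qtau_law mu0 c0 c1 mA).
  exact: (qf_law mu1 mA).
have := H pi hc.
set E := [set u | (qf mu1 u - qtau mu0 c u) \in I].
move=> h0; have h1 : ((1 - alpha)%:E <= lebesgue_measure (E `&` `]0%R, 1%R[%classic))%E := h0.
clear h0.
have mE : measurable E.
  rewrite /E -[X in measurable X]setTI.
  exact: (measurable_realfun.measurable_funB (qf_measurable mu1) (qtau_measurable mu0 c) measurableT (measurable_itv I)).
have : (lebesgue_measure (E `&` `]0%R, 1%R[%classic) <= lebesgue_measure (`[(1 - c)%R, 1%R]%classic : set R))%E.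
  apply: le_measure; rewrite ?inE//.
  - by apply: measurableI => //; exact: measurable_itv.
  move=> u [Eu]; rewrite /= !in_itv/= => /andP[u0 u1]; rewrite (ltW u1) andbT.
  rewrite leNgt; apply/negP => uc; apply: hneg.
  exists (qf mu1 u - qtau mu0 c u); split => //.
  rewrite subr_le0 /qtau tau_lt//; exact: key_ineq.
rewrite lebesgue_measure_itv/= lte_fin.
move=> h2; have := le_trans h1 h2.
case: ifPn => _; last by rewrite lee_fin; lra.
rewrite lee_fin; lra.
Qed.
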